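(* Let $\mathcal A$ be a well-structured abstract domain with functions $(\alpha,\gamma)$, and let monotone abstract operators $\llbracket e\rrbracket^\#:\mathcal A\to\mathcal A$ be given for each basic command $e$. If $\llbracket e\rrbracket^\#$ is a complete abstraction of $\llbracket e\rrbracket$ for every basic command $e$, then the induced incorrectness proof system described in the context is sound and relatively complete: for all $a,b\in\mathcal A$ and programs $S$, $\vdash_{\mathrm{in}}[a]\,S\,[b]$ iff $\models_{\mathrm{in}}[a]\,S\,[b]$.
   Context: Fix a finite set $V$ of quantum variables, each a qubit with state space $\mathcal H_q\cong\mathbb C^2$; for $W\subseteq V$, $\mathcal H_W=\bigotimes_{q\in W}\mathcal H_q$. Operators and subspaces on $\mathcal H_W$ are identified with their cylindrical extensions to $\mathcal H_V$, and a subspace is identified with its orthogonal projector; $P^\perp$ is the orthocomplement. $\mathcal D(\mathcal H_V)$ is the set of partial density operators (positive, trace $\le1$). Programs: $S::=\mathbf{skip}\mid \bar q:=|0\rangle\mid \bar q\mathrel{*{=}}U\mid \mathbf{assert}\ P[\bar q]\mid S_0;S_1\mid \mathbf{if}\ P[\bar q]\ \mathbf{then}\ S_1\ \mathbf{else}\ S_0\ \mathbf{end}\mid\mathbf{while}\ P[\bar q]\ \mathbf{do}\ S\ \mathbf{end}$, with $\bar q=q_1,\dots,q_t$ distinct variables, $U$ unitary on $\mathcal H_{\bar q}$, $P$ a subspace of $\mathcal H_{\bar q}$; the first four forms are the basic commands. Semantics $\llbracket S\rrbracket:\mathcal D(\mathcal H_V)\to\mathcal D(\mathcal H_V)$: $\llbracket\mathbf{skip}\rrbracket(\rho)=\rho$;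 $\llbracket\bar q:=|0\rangle\rrbracket(\rho)=\sum_{i=0}^{2^t-1}|0\rangle_{\bar q}\langle i|\rho|i\rangle_{\bar q}\langle0|$; $\llbracket\bar q\mathrel{*{=}}U\rrbracket(\rho)=U\rho U^\dagger$; $\llbracket\mathbf{assert}\ P[\bar q]\rrbracket(\rho)=P\rho P$; $\llbracket S_0;S_1\rrbracket=\llbracket S_1\rrbracket\circ\llbracket S_0\rrbracket$; $\llbracket\mathbf{if}\ P[\bar q]\ \mathbf{then}\ S_1\ \mathbf{else}\ S_0\ \mathbf{end}\rrbracket(\rho)=\llbracket\mathbf{assert}\ P[\bar q];S_1\rrbracket(\rho)+\llbracket\mathbf{assert}\ P^\perp[\bar q];S_0\rrbracket(\rho)$; $\llbracket\mathbf{while}\ P[\bar q]\ \mathbf{do}\ S\ \mathbf{end}\rrbracket(\rho)=\sum_{i\ge0}\llbracket(\mathbf{assert}\ P[\bar q];S)^i;\mathbf{assert}\ P^\perp[\bar q]\rrbracket(\rho)$, where $T^i$ is $i$-fold sequential composition ($T^0=\mathbf{skip}$). The concrete domain is $\mathcal Q=2^{\mathcal D(\mathcal H_V)}$ ordered by inclusion, and $\llbracket S\rrbracket(R)=\{\llbracket S\rrbracket(\rho):\rho\in R\}$. A pair of monotone maps $(\alpha,\gamma)$ between posets is a Galois connection if $c\le\gamma(a)\iff\alpha(c)\le a$, and a Galois embedding if moreover $\alpha\circ\gamma=\mathrm{id}$. A complete lattice $(\mathcal A,\le_{\mathcal A},\vee,\wedge,\bot,\top)$ with monotone $\alpha:\mathcal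 Q\to\mathcal A$, $\gamma:\mathcal A\to\mathcal Q$ is a well-structured abstract domain if (a) $(\alpha,\gamma)$ is a Galois embedding, and (b) for any family $\rho_i\in\mathcal D(\mathcal H_V)$ and reals $x_i>0$ with $\sum_i x_i\rho_i\in\mathcal D(\mathcal H_V)$, $\alpha(\sum_i x_i\rho_i)=\bigvee_i\alpha(\rho_i)$, where $\alpha(\rho)=\alpha(\{\rho\})$. $f^\#$ is a complete abstraction of $f:\mathcal Q\to\mathcal Q$ if $\alpha\circ f=f^\#\circ\alpha$. The best abstraction of $\llbracket S\rrbracket$ is $\llbracket S\rrbracket^b=\alpha\circ\llbracket S\rrbracket\circ\gamma$. Induced incorrectness system: assertions are elements of $\mathcal A$; $\models_{\mathrm{in}}[a]\,S\,[b]$ iff $b\le_{\mathcal A}\llbracket S\rrbracket^b(a)$. Derivability $\vdash_{\mathrm{in}}$ is w.r.t. the rules: (Exp-In) $[a]\,e\,[\llbracket e\rrbracket^\#(a)]$ for every basic command $e$; (Seq-In) from $[a]\,S_0\,[a']$ and $[a']\,S_1\,[b]$ infer $[a]\,S_0;S_1\,[b]$; (Imp-In) from $a'\le_{\mathcal A}a$, $[a']\,S\,[b']$, $b\le_{\mathcal A}b'$ infer $[a]\,S\,[b]$; (Meas-In) from $[a]\,\mathbf{assert}\ P[\bar q];S_1\,[b_1]$ and $[a]\,\mathbf{assert}\ P^\perp[\bar q];S_0\,[b_0]$ infer $[a]\,\mathbf{if}\ P[\bar q]\ \mathbf{then}\ S_1\ \mathbf{else}\ S_0\ \mathbf{end}\,[b_0\vee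 b_1]$; (While-In) from $[a_i]\,\mathbf{assert}\ P[\bar q];S\,[a_{i+1}]$ and $[a_i]\,\mathbf{assert}\ P^\perp[\bar q]\,[b_i]$ for all $i\ge0$ infer $[a_0]\,\mathbf{while}\ P[\bar q]\ \mathbf{do}\ S\ \mathbf{end}\,[\bigvee_{i\ge0}b_i]$. *)

(* Defs.v *)
From HB Require Import structures.
From mathcomp Require Import all_boot all_order all_algebra.
From mathcomp Require Import all_classical all_reals all_analysis.
From mathcomp Require Import complex.
Import Order.TTheory GRing.Theory Num.Theory.
Import numFieldNormedType.Exports.

Set Implicit Arguments.
Unset Strict Implicit.
Unset Printing Implicit Defensive.

Local Open Scope ring_scope.
Local Open Scope classical_set_scope.

(* Hilbert spaces.  R : realType, scalars C := R[i].  V : finType is the set *)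
(* of qubit variables.  The computational basis of H_V = (C^2)^{(x) V} is   *)
(* indexed by the finite type  {ffun V -> bool}; operators on H_V are square *)
(* matrices indexed by 'I_#|{ffun V -> bool}| (via enum_val / enum_rank).    *)
(* For a list of distinct variables qs = q_1,...,q_t, H_qs = (C^2)^{(x) t}   *)
(* has basis {ffun 'I_t -> bool} (component k <-> qubit q_(k+1)).            *)

Section Quantum.
Variable R : realType.
Local Notation C := R[i].
Variable V : finType.

Definition basis := {ffun V -> bool}.
Definition dimV := #|{: basis}|.
Definition Op := 'M[C]_dimV.

Definition lbasis (qs : seq V) := {ffun 'I_(size qs) -> bool}.
Definition ldim (qs : seq V) := #|{: lbasis qs}|.
Definition LOp (qs : seq V) := 'M[C]_(ldim qs).

Definition adjmx m n (A : 'M[C]_(m, n)) : 'M[C]_(n, m) :=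
  (map_mx (fun z : C => z^*) A)^T.

Definition restr (qs : seq V) (x : basis) : lbasis qs :=
  [ffun k => x (tnth (in_tuple qs) k)].

(* cylindrical extension  A (x) I_{V \ qs}  of an operator on H_qs *)
Definition cyl (qs : seq V) (A : LOp qs) : Op :=
  \matrix_(i, j)
    (let x := (enum_val i : basis) in let y := (enum_val j : basis) in
     if [forall v, (v \notin qs) ==> (x v == y v)]
     then A (enum_rank (restr qs x)) (enum_rank (restr qs y)) else 0).

(* orthocomplement of a subspace (given by its projector) of H_qs *)
Definition perp (qs : seq V) (P : LOp qs) : LOp qs := 1%:M - P.

Definition ketbra0 (qs : seq V) (k : lbasis qs) : LOp qs :=
  \matrix_(i, j)
    ((enum_val i == [ffun => false] :> lbasis qs) && (enum_val j == k))%:R.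

Definition is_unitary n (U : 'M[C]_n) := U *m adjmx U = 1%:M /\ adjmx U *m U = 1%:M.
Definition is_projector n (P : 'M[C]_n) := P *m P = P /\ adjmx P = P.

Definition is_psd n (A : 'M[C]_n) := forall v : 'cV[C]_n, 0 <= (adjmx v *m A *m v) 0 0.
Definition is_dens (rho : Op) := is_psd rho /\ \tr rho <= 1.

Definition partial_sum (f : nat -> Op) (n : nat) : Op := \sum_(k < n) f k.
Definition op_hassum (f : nat -> Op) (s : Op) :=
  forall i j,
    (fun n => complex.Re (partial_sum f n i j)) @ \oo --> complex.Re (s i j) /\
    (fun n => complex.Im (partial_sum f n i j)) @ \oo --> complex.Im (s i j).
Definition op_series (f : nat -> Op) : Op :=
  \matrix_(i, j) ((limn (fun n => complex.Re (partial_sum f n i j))) +i*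
                  (limn (fun n => complex.Im (partial_sum f n i j))))%C.

Inductive bcmd : Type :=
  | BSkip
  | BInit (qs : seq V)
  | BUnit (qs : seq V) (U : LOp qs)
  | BAssert (qs : seq V) (P : LOp qs).

Inductive prog : Type :=
  | Basic (e : bcmd)
  | PSeq (S0 S1 : prog)
  | PIf (qs : seq V) (P : LOp qs) (S1 S0 : prog)
  | PWhile (qs : seq V) (P : LOp qs) (S : prog).

Definition wf_qs (qs : seq V) := uniq qs /\ (0 < size qs)%N.

Definition wf_bcmd (e : bcmd) : Prop :=
  match e with
  | BSkip => True
  | BInit qs => wf_qs qs
  | BUnit qs U => wf_qs qs /\ is_unitary U
  | BAssert qs P => wf_qs qs /\ is_projector P
  end.

Fixpoint wf_prog (S : prog) : Prop :=
  match S with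
  | Basic e => wf_bcmd e
  | PSeq S0 S1 => wf_prog S0 /\ wf_prog S1
  | PIf qs P S1 S0 => (wf_qs qs /\ is_projector P) /\ wf_prog S1 /\ wf_prog S0
  | PWhile qs P Sb => (wf_qs qs /\ is_projector P) /\ wf_prog Sb
  end.

Definition assert_sem (qs : seq V) (P : LOp qs) (rho : Op) : Op :=
  cyl P *m rho *m cyl P.

Definition bsem (e : bcmd) (rho : Op) : Op :=
  match e with
  | BSkip => rho
  | BInit qs => \sum_(k : lbasis qs)
                 cyl (ketbra0 k) *m rho *m adjmx (cyl (ketbra0 k))
  | BUnit qs U => cyl U *m rho *m adjmx (cyl U)
  | BAssert qs P => assert_sem P rho
  end.

Fixpoint sem (S : prog) (rho : Op) : Op :=
  match S with
  | Basic e => bsem e rho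
  | PSeq S0 S1 => sem S1 (sem S0 rho)
  | PIf qs P S1 S0 => sem S1 (assert_sem P rho) + sem S0 (assert_sem (perp P) rho)
  | PWhile qs P Sb =>
      op_series (fun i =>
        assert_sem (perp P) (iter i (fun r => sem Sb (assert_sem P r)) rho))
  end.

Definition sem_set (S : prog) (X : set Op) : set Op := (sem S) @` X.

(* elements of the concrete domain: sets of partial density operators *)
Definition in_Q (X : set Op) := X `<=` is_dens.

End Quantum.

Definition is_complete_lattice (A : Type) (le : A -> A -> Prop)
    (sup : set A -> A) : Prop :=
  [/\ (forall a, le a a),
      (forall a b c, le a b -> le b c -> le a c),
      (forall a b, le a b -> le b a -> a = b),
      (forall (X : set A) a, X a -> le a (sup X)) &
      (forall (X : set A) b, (forall a, X a -> le a b) -> le (sup X) b)].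

Section Abstract.
Variable R : realType.
Variable V : finType.
Local Notation Op := (Op R V).
Variable A : Type.
Variables (le : A -> A -> Prop) (sup : set A -> A).
Variables (alpha : set Op -> A) (gamma : A -> set Op).

Definition join (a b : A) : A := sup [set a; b].

Definition galois_embedding : Prop :=
  [/\ (forall X Y, in_Q X -> in_Q Y -> X `<=` Y -> le (alpha X) (alpha Y)),
      (forall a b, le a b -> gamma a `<=` gamma b),
      (forall a, in_Q (gamma a)),
      (forall X a, in_Q X -> (X `<=` gamma a <-> le (alpha X) a)) &
      (forall a, alpha (gamma a) = a)].

(* condition (b): alpha (sum_i x_i rho_i) = \/_i alpha(rho_i) for every
   (finite or countably infinite, possibly empty) family: the family is
   encoded as fam : nat -> option (R * Op), the members being the Some's. *)
Definition fam_term (fam : nat -> option (R * Op)) (n : nat) : Op :=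
  match fam n with Some (x, rho) => x%:C%C *: rho | None => 0 end.

Definition alpha_additive : Prop :=
  forall (fam : nat -> option (R * Op)) (s : Op),
    (forall n x rho, fam n = Some (x, rho) -> 0 < x /\ is_dens rho) ->
    op_hassum (fam_term fam) s ->
    is_dens s ->
    alpha [set s] = sup [set alpha [set rho] | rho in
                           [set rho | exists n x, fam n = Some (x, rho)]].

Definition well_structured : Prop :=
  [/\ is_complete_lattice le sup, galois_embedding & alpha_additive].

Definition complete_abstraction (f : set Op -> set Op) (fs : A -> A) : Prop :=
  forall X, in_Q X -> alpha (f X) = fs (alpha X).

Definition best_abs (S : prog R V) (a : A) : A := alpha (sem_set S (gamma a)).

Definition valid_in (a : A) (S : prog R V) (b : A) : Prop := le b (best_abs S a).

Variable fsharp : bcmd R V -> A -> A.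

Inductive derivable_in : A -> prog R V -> A -> Prop :=
  | ExpIn (e : bcmd R V) (a : A) :
      derivable_in a (Basic e) (fsharp e a)
  | SeqIn (a a' b : A) (S0 S1 : prog R V) :
      derivable_in a S0 a' -> derivable_in a' S1 b ->
      derivable_in a (PSeq S0 S1) b
  | ImpIn (a a' b b' : A) (S : prog R V) :
      le a' a -> derivable_in a' S b' -> le b b' ->
      derivable_in a S b
  | MeasIn (a b0 b1 : A) (qs : seq V) (P : LOp R qs) (S1 S0 : prog R V) :
      derivable_in a (PSeq (Basic (BAssert P)) S1) b1 ->
      derivable_in a (PSeq (Basic (BAssert (perp P))) S0) b0 ->
      derivable_in a (PIf P S1 S0) (join b0 b1)
  | WhileIn (as_ bs : nat -> A) (qs : seq V) (P : LOp R qs) (S : prog R V) :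
      (forall i, derivable_in (as_ i) (PSeq (Basic (BAssert P)) S) (as_ i.+1)) ->
      (forall i, derivable_in (as_ i) (Basic (BAssert (perp P))) (bs i)) ->
      derivable_in (as_ 0%N) (PWhile P S) (sup (range bs)).

End Abstract.

(* Main.v *)
Require Import Defs.
From HB Require Import structures.
From mathcomp Require Import all_boot all_order all_algebra.
From mathcomp Require Import all_classical all_reals all_analysis.
From mathcomp Require Import complex.
From mathcomp Require Import ring lra.
Import Order.TTheory GRing.Theory Num.Theory.
Import numFieldNormedType.Exports.
Set Implicit Arguments.
Unset Strict Implicit.
Unset Printing Implicit Defensive.
Local Open Scope ring_scope.
Local Open Scope classical_set_scope.
Section LinAlg.
Variable R : realType.
Local Notation C := R[i].

Lemma adjmxE m n (A : 'M[C]_(m,n)) i j : adjmx A i j = ((A j i)^*)%C.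
Proof. by rewrite /adjmx !mxE. Qed.

Lemma adjmxK m n (A : 'M[C]_(m,n)) : adjmx (adjmx A) = A.
Proof. by apply/matrixP=> i j; rewrite !adjmxE conjcK. Qed.

Lemma adjmxM m n p (A : 'M[C]_(m,n)) (B : 'M[C]_(n,p)) :
  adjmx (A *m B) = adjmx B *m adjmx A.
Proof. by rewrite /adjmx map_mxM trmx_mul. Qed.

Lemma adjmxD m n (A B : 'M[C]_(m,n)) : adjmx (A + B) = adjmx A + adjmx B.
Proof. by apply/matrixP=> i j; rewrite !(mxE, adjmxE) rmorphD. Qed.

Lemma adjmxN m n (A : 'M[C]_(m,n)) : adjmx (- A) = - adjmx A.
Proof. by apply/matrixP=> i j; rewrite !(mxE, adjmxE) rmorphN. Qed.

Lemma adjmxB m n (A B : 'M[C]_(m,n)) : adjmx (A - B) = adjmx A - adjmx B.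
Proof. by rewrite adjmxD adjmxN. Qed.

Lemma adjmx0 m n : adjmx (0 : 'M[C]_(m,n)) = 0.
Proof. by apply/matrixP=> i j; rewrite adjmxE !mxE conjc0. Qed.

Lemma adjmx1 n : adjmx (1%:M : 'M[C]_n) = 1%:M.
Proof. by apply/matrixP=> i j; rewrite adjmxE !mxE eq_sym; case: eqP; rewrite ?conjc1 ?conjc0. Qed.

Lemma adjmxZ m n (c : C) (A : 'M[C]_(m,n)) : adjmx (c *: A) = (c^*)%C *: adjmx A.
Proof. by apply/matrixP=> i j; rewrite !(mxE, adjmxE) rmorphM. Qed.

Lemma adjmx_sum m n (I : finType) (F : I -> 'M[C]_(m,n)) :
  adjmx (\sum_i F i) = \sum_i adjmx (F i).
Proof.
by apply: (big_morph (@adjmx R m n)); [exact: adjmxD | exact: adjmx0].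
Qed.

End LinAlg.
Section Psd.
Variable R : realType.
Local Notation C := R[i].
Variable n : nat.
Implicit Types (M A B K : 'M[C]_n) (v : 'cV[C]_n).

Definition qf v M := (adjmx v *m M *m v) 0 0.

Lemma psdE M : is_psd M <-> forall v, 0 <= qf v M.
Proof. by []. Qed.

Lemma qf_conj v K M : qf v (K *m M *m adjmx K) = qf (adjmx K *m v) M.
Proof. by rewrite /qf adjmxM adjmxK !mulmxA. Qed.

Lemma psd_conj K M : is_psd M -> is_psd (K *m M *m adjmx K).
Proof. by move=> H v; rewrite -[X in 0 <= X]/(qf v _) qf_conj; apply: H. Qed.

Lemma qfD v A B : qf v (A + B) = qf v A + qf v B.
Proof. by rewrite /qf mulmxDr mulmxDl mxE. Qed.

Lemma qf0 v : qf v 0 = 0.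
Proof. by rewrite /qf mulmx0 mul0mx mxE. Qed.

Lemma qfN v A : qf v (- A) = - qf v A.
Proof. by rewrite /qf mulmxN mulNmx mxE. Qed.

Lemma qfB v A B : qf v (A - B) = qf v A - qf v B.
Proof. by rewrite qfD qfN. Qed.

Lemma psd0 : is_psd (0 : 'M[C]_n).
Proof. by move=> v; rewrite -[X in 0 <= X]/(qf v _) qf0. Qed.

Lemma psdD A B : is_psd A -> is_psd B -> is_psd (A + B).
Proof. by move=> HA HB v; rewrite -[X in 0 <= X]/(qf v _) qfD; apply: addr_ge0; [apply: HA|apply: HB]. Qed.

Lemma psd_sum (I : finType) (F : I -> 'M[C]_n) :
  (forall i, is_psd (F i)) -> is_psd (\sum_i F i).
Proof.
move=> H; apply: (big_ind (@is_psd R n)); [exact: psd0| exact: psdD|] => i _; exact: H.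
Qed.

Lemma adj_e i : adjmx (delta_mx i 0 : 'cV[C]_n) = delta_mx 0 i.
Proof.
apply/matrixP=> a b; rewrite adjmxE !mxE.
by case: (b == i); case: (a == 0); rewrite ?conjc1 ?conjc0.
Qed.

Lemma qf_e i M : qf (delta_mx i 0) M = M i i.
Proof. by rewrite /qf adj_e -rowE -colE !mxE. Qed.

Lemma psd_diag M i : is_psd M -> 0 <= M i i.
Proof. by move=> H; rewrite -qf_e; apply: H. Qed.

Lemma trE M : \tr M = \sum_i M i i.
Proof. by []. Qed.

Lemma tr_ge0 M : is_psd M -> 0 <= \tr M.
Proof. by move=> H; rewrite trE sumr_ge0 // => i _; apply: psd_diag. Qed.

Lemma tr_conj K M : \tr (K *m M *m adjmx K) = \tr (adjmx K *m K *m M).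
Proof. by rewrite mxtrace_mulC mulmxA. Qed.

End Psd.
Section Cyl.
Variable R : realType.
Local Notation C := R[i].
Variable V : finType.
Local Notation basis := (Defs.basis V).
Local Notation Op := (Op R V).

Lemma sum_rank (T : finType) (F : 'I_#|T| -> C) :
  \sum_k F k = \sum_(z : T) F (enum_rank z).
Proof.
rewrite (reindex (@enum_rank T)) //; exists enum_val => z _.
  by rewrite enum_rankK. by rewrite enum_valK.
Qed.

Variable qs : seq V.
Hypothesis Uq : uniq qs.

Definition agree (x y : basis) := [forall v, (v \notin qs) ==> (x v == y v)].

Lemma agreeC x y : agree x y = agree y x.
Proof. by apply/forallP/forallP=> H v; rewrite eq_sym; apply: H. Qed.

Lemma agree_trans x y z : agree x y -> agree y z -> agree x z.
Proof.
move=> /forallP H1 /forallP H2; apply/forallP=> v; apply/implyP=> Hv.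
by rewrite (eqP (implyP (H1 v) Hv)) (implyP (H2 v) Hv).
Qed.

Lemma agree_refl x : agree x x.
Proof. by apply/forallP=> v; rewrite eqxx implybT. Qed.

Lemma cylE (A : LOp R qs) x y :
  cyl A (enum_rank x) (enum_rank y) =
  if agree x y then A (enum_rank (restr qs x)) (enum_rank (restr qs y)) else 0.
Proof. by rewrite mxE !enum_rankK. Qed.

Lemma matrix_basisP (M N : Op) :
  (forall x y : basis, M (enum_rank x) (enum_rank y) = N (enum_rank x) (enum_rank y)) ->
  M = N.
Proof.
move=> H; apply/matrixP=> i j.
by rewrite -(enum_valK i) -(enum_valK j) H.
Qed.

Definition ext (x : basis) (k : lbasis qs) : basis :=
  [ffun v => if insub (index v qs) is Some o then k o else x v].

Lemma restr_ext x k : restr qs (ext x k) = k.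
Proof.
apply/ffunP=> w; rewrite !ffunE (tnth_nth (tnth (in_tuple qs) w)) /=.
rewrite index_uniq //.
by rewrite (insubT (fun i => i < size qs)%N (ltn_ord w)) /=; congr (k _); apply: val_inj.
Qed.

Lemma agree_ext x k : agree x (ext x k).
Proof.
apply/forallP=> v; apply/implyP=> Hv; rewrite ffunE.
by rewrite insubF // index_mem (negPf Hv).
Qed.

Lemma ext_restr x z : agree x z -> ext x (restr qs z) = z.
Proof.
move=> /forallP H; apply/ffunP=> v; rewrite ffunE.
case: insubP => [w Hw Hv | ].
  rewrite ffunE (tnth_nth v) /= Hv nth_index //.
  by rewrite -index_mem.
rewrite index_mem => /negbTE Hv; apply/eqP.
by have := H v; rewrite Hv.
Qed.

Lemma sum_agree x (F : lbasis qs -> C) :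
  \sum_(z | agree x z) F (restr qs z) = \sum_k F k.
Proof.
rewrite (reindex (ext x)) /=.
  by apply: eq_big => k; rewrite ?agree_ext // => _; rewrite restr_ext.
exists (restr qs) => k Hk; first by rewrite restr_ext.
by rewrite ext_restr.
Qed.

Lemma cylM (A B : LOp R qs) : cyl (A *m B) = cyl A *m cyl B.
Proof.
apply: matrix_basisP => x y.
rewrite cylE [RHS]mxE sum_rank.
under eq_bigr do rewrite !cylE.
case: (boolP (agree x y)) => Hxy.
  rewrite (bigID (agree x)) /= [X in _ + X]big1 ?addr0; last first.
    by move=> z /negPf ->; rewrite mul0r.
  have Hzy z : agree x z -> agree z y.
    by move=> Hz; apply: agree_trans Hxy; rewrite agreeC.
  under eq_bigr => z Hz do rewrite Hz (Hzy z Hz).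
  rewrite mxE sum_rank.
  rewrite -(sum_agree x (fun k => A (enum_rank (restr qs x)) (enum_rank k) *
                                  B (enum_rank k) (enum_rank (restr qs y)))).
  by [].
rewrite big1 // => z _.
case: (boolP (agree x z)) => Hxz; last by rewrite mul0r.
case: (boolP (agree z y)) => Hzy; last by rewrite mulr0.
by rewrite (agree_trans Hxz Hzy) in Hxy.
Qed.

Lemma cylD (A B : LOp R qs) : cyl (A + B) = cyl A + cyl B.
Proof.
apply: matrix_basisP => x y; rewrite [RHS]mxE !cylE.
by case: (agree x y); rewrite ?mxE ?addr0.
Qed.

Lemma cyl0 : cyl (0 : LOp R qs) = 0.
Proof.
apply: matrix_basisP => x y; rewrite cylE [RHS]mxE.
by case: (agree x y); rewrite ?mxE.
Qed.

Lemma cylN (A : LOp R qs) : cyl (- A) = - cyl A.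
Proof.
apply: matrix_basisP => x y; rewrite [RHS]mxE !cylE.
by case: (agree x y); rewrite ?mxE ?oppr0.
Qed.

Lemma cyl_sum (I : finType) (F : I -> LOp R qs) :
  cyl (\sum_i F i) = \sum_i cyl (F i).
Proof. by apply: (big_morph (@cyl R V qs)); [exact: cylD| exact: cyl0]. Qed.

Lemma restr_inj x y : agree x y -> restr qs x = restr qs y -> x = y.
Proof.
move=> /forallP Hxy Hr; apply/ffunP=> v; case: (boolP (v \in qs)) => Hv.
  have Hi : (index v qs < size qs)%N by rewrite index_mem.
  have := congr1 (fun f : lbasis qs => f (Ordinal Hi)) Hr.
  by rewrite !ffunE (tnth_nth v) /= nth_index.
by apply/eqP; have := Hxy v; rewrite Hv.
Qed.

Lemma cyl1 : cyl (1%:M : LOp R qs) = 1%:M.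
Proof.
apply: matrix_basisP => x y; rewrite cylE !mxE.
rewrite (inj_eq enum_rank_inj) (inj_eq enum_rank_inj).
case: (boolP (agree x y)) => Hxy.
  have -> : (restr qs x == restr qs y) = (x == y).
    by apply/eqP/eqP => [Hr|->//]; apply: restr_inj.
  by [].
case: eqP => // Exy; by rewrite Exy agree_refl in Hxy.
Qed.

Lemma cyl_adj (A : LOp R qs) : adjmx (cyl A) = cyl (adjmx A).
Proof.
apply: matrix_basisP => x y; rewrite adjmxE !cylE adjmxE agreeC.
by case: (agree x y); rewrite ?conjc0.
Qed.

End Cyl.
Section BasicSem.
Variable R : realType.
Local Notation C := R[i].
Variable V : finType.
Local Notation Op := (Op R V).

Lemma trD (A B : Op) : \tr (A + B) = \tr A + \tr B.
Proof. exact: mxtraceD. Qed.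

Lemma trB (A B : Op) : \tr (A - B) = \tr A - \tr B.
Proof. by rewrite raddfB. Qed.

Lemma tr_sum (I : finType) (F : I -> Op) : \tr (\sum_i F i) = \sum_i \tr (F i).
Proof. by rewrite raddf_sum. Qed.

Lemma adj_delta m n (a : 'I_m) (b : 'I_n) : adjmx (delta_mx a b : 'M[C]_(m,n)) = delta_mx b a.
Proof.
apply/matrixP=> i j; rewrite adjmxE !mxE.
by case: (j == a); case: (i == b); rewrite ?conjc1 ?conjc0.
Qed.

Variable qs : seq V.
Hypothesis Uq : uniq qs.

Lemma perp_projector (P : LOp R qs) : is_projector P -> is_projector (perp P).
Proof.
case=> H1 H2; split; rewrite /perp.
  by rewrite mulmxBl mul1mx mulmxBr mulmx1 H1 subrr subr0.
by rewrite adjmxB adjmx1 H2.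
Qed.

Lemma cyl_perp (P : LOp R qs) : cyl (perp P) = 1%:M - cyl P.
Proof. by rewrite /perp cylD // cylN // cyl1. Qed.

Lemma cyl_projector (P : LOp R qs) :
  is_projector P -> cyl P *m cyl P = cyl P /\ adjmx (cyl P) = cyl P.
Proof. by case=> H1 H2; rewrite -cylM // cyl_adj // H1 H2. Qed.

Lemma assert_psd (P : LOp R qs) (rho : Op) :
  is_projector P -> is_psd rho -> is_psd (assert_sem P rho).
Proof.
move=> /cyl_projector [_ H2] Hr; rewrite /assert_sem.
by rewrite -{2}H2; apply: psd_conj.
Qed.

Lemma tr_assert (P : LOp R qs) (rho : Op) :
  is_projector P -> \tr (assert_sem P rho) = \tr (cyl P *m rho).
Proof.
move=> /cyl_projector [H1 _]; rewrite /assert_sem mxtrace_mulC.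
by rewrite mulmxA H1.
Qed.

Lemma tr_split (P : LOp R qs) (rho : Op) :
  is_projector P ->
  \tr (assert_sem P rho) + \tr (assert_sem (perp P) rho) = \tr rho.
Proof.
move=> HP; rewrite (tr_assert _ HP) (tr_assert _ (perp_projector HP)) cyl_perp.
by rewrite mulmxBl mul1mx trB addrC subrK.
Qed.

Lemma assert_tr_le (P : LOp R qs) (rho : Op) :
  is_projector P -> is_psd rho -> \tr (assert_sem P rho) <= \tr rho.
Proof.
move=> HP Hr; rewrite -(tr_split rho HP) lerDl.
by apply: tr_ge0; apply: assert_psd => //; apply: perp_projector.
Qed.

Lemma unit_psd (W : LOp R qs) (rho : Op) :
  is_psd rho -> is_psd (cyl W *m rho *m adjmx (cyl W)).
Proof. exact: psd_conj. Qed.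

Lemma unit_tr (W : LOp R qs) (rho : Op) :
  Defs.is_unitary W -> \tr (cyl W *m rho *m adjmx (cyl W)) = \tr rho.
Proof.
case=> _ H2; rewrite tr_conj cyl_adj // -cylM // H2 cyl1 //.
by rewrite mul1mx.
Qed.

Lemma ketbra0E (k : lbasis qs) :
  ketbra0 R k = delta_mx (enum_rank [ffun => false]) (enum_rank k).
Proof.
have E (T : finType) (i : 'I_#|T|) (z : T) : (i == enum_rank z) = (enum_val i == z).
  by apply/eqP/eqP => [->|<-]; rewrite ?enum_rankK ?enum_valK.
by apply/matrixP=> i j; rewrite !mxE !E.
Qed.

Lemma kraus_sum :
  \sum_(k : lbasis qs) adjmx (ketbra0 R k) *m ketbra0 R k = 1%:M.
Proof.
under eq_bigr do rewrite ketbra0E adj_delta mul_delta_mx.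
rewrite mx1_sum_delta (reindex (@enum_rank _)) //.
by exists enum_val => z _; rewrite ?enum_rankK ?enum_valK.
Qed.

Lemma init_psd (rho : Op) :
  is_psd rho -> is_psd (bsem (BInit R qs) rho).
Proof. by move=> Hr; apply: psd_sum => k; apply: psd_conj. Qed.

Lemma init_tr (rho : Op) : \tr (bsem (BInit R qs) rho) = \tr rho.
Proof.
rewrite /= tr_sum.
under eq_bigr do rewrite tr_conj cyl_adj // -cylM //.
rewrite -tr_sum -mulmx_suml -cyl_sum // kraus_sum cyl1 //.
by rewrite mul1mx.
Qed.

End BasicSem.
Section CplxFacts.
Variable R : realType.
Local Notation C := R[i].

Lemma ReD (x y : C) : complex.Re (x + y) = complex.Re x + complex.Re y.
Proof. by case: x; case: y. Qed.
Lemma ImD (x y : C) : complex.Im (x + y) = complex.Im x + complex.Im y.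
Proof. by case: x; case: y. Qed.
Lemma Re0 : complex.Re (0 : C) = 0. Proof. by []. Qed.
Lemma Im0 : complex.Im (0 : C) = 0. Proof. by []. Qed.
Lemma ReM (x y : C) : complex.Re (x * y) = complex.Re x * complex.Re y - complex.Im x * complex.Im y.
Proof. by case: x => a b; case: y. Qed.
Lemma ImM (x y : C) : complex.Im (x * y) = complex.Re x * complex.Im y + complex.Im x * complex.Re y.
Proof. by case: x => a b; case: y. Qed.
Lemma Re_sum (I : Type) (r : seq I) (P : pred I) (F : I -> C) :
  complex.Re (\sum_(i <- r | P i) F i) = \sum_(i <- r | P i) complex.Re (F i).
Proof. by apply: (big_morph (@complex.Re R)); [exact: ReD|exact: Re0]. Qed.
Lemma Im_sum (I : Type) (r : seq I) (P : pred I) (F : I -> C) :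
  complex.Im (\sum_(i <- r | P i) F i) = \sum_(i <- r | P i) complex.Im (F i).
Proof. by apply: (big_morph (@complex.Im R)); [exact: ImD|exact: Im0]. Qed.
Lemma ge0_C (x : C) : (0 <= x) = (complex.Im x == 0) && (0 <= complex.Re x).
Proof. by rewrite lecE eq_sym. Qed.
Lemma le_C (x y : C) : (x <= y) = (complex.Im y == complex.Im x) && (complex.Re x <= complex.Re y).
Proof. by rewrite lecE. Qed.

Lemma cvg_sum_seq (I : Type) (r : seq I) (u : I -> nat -> R) (l : I -> R) :
  (forall i, u i n @[n --> \oo] --> l i) ->
  (\sum_(i <- r) u i n) @[n --> \oo] --> \sum_(i <- r) l i.
Proof.
move=> H; elim: r => [|i r IH].
  rewrite big_nil; under eq_cvg do rewrite big_nil; exact: cvg_cst.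
rewrite big_cons; under eq_cvg do rewrite big_cons.
exact: cvgD.
Qed.

Lemma cvg_eq0 (u : nat -> R) l : u n @[n --> \oo] --> l -> (forall n, u n = 0) -> l = 0.
Proof.
move=> Hc H; apply/eqP; rewrite eq_le; apply/andP; split.
  by apply: (cvgr_to_le Hc); apply: nearW => n; rewrite H.
by apply: (cvgr_to_ge Hc); apply: nearW => n; rewrite H.
Qed.
End CplxFacts.
Section Herm.
Variable R : realType.
Local Notation C := R[i].
Variable V : finType.
Local Notation Op := (Op R V).
Local Notation n := (dimV V).
Local Notation Re := (@complex.Re R).
Local Notation Im := (@complex.Im R).

Definition ev (i : 'I_n) : 'cV[C]_n := delta_mx i 0.
Definition bf (u v : 'cV[C]_n) (M : Op) := (adjmx u *m M *m v) 0 0.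

Lemma bf_e i j (M : Op) : bf (ev i) (ev j) M = M i j.
Proof. by rewrite /bf /ev adj_e -rowE -colE !mxE. Qed.

Lemma qf_comb u v (w : C) (M : Op) :
  qf (u + w *: v) M = qf u M + w * bf u v M + (w^*)%C * bf v u M + (w^*)%C * w * qf v M.
Proof.
rewrite /qf /bf adjmxD adjmxZ.
rewrite !(mulmxDl, mulmxDr) -?scalemxAl -?scalemxAr -?scalemxAl -?scalemxAr !mxE; ring.
Qed.

Lemma psd_qf (M : Op) v : is_psd M -> 0 <= qf v M.
Proof. by move=> H; apply: H. Qed.

Lemma psd_entries (M : Op) i j : is_psd M ->
  Re (M i j) = (Re (qf (ev i + 1 *: ev j) M) - Re (M i i) - Re (M j j)) / 2 /\
  Im (M i j) = (Re (M i i) + Re (M j j) - Re (qf (ev i + 'i%C *: ev j) M)) / 2.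
Proof.
move=> H.
have H1 := psd_qf (ev i + 1 *: ev j) H.
have H2 := psd_qf (ev i + 'i%C *: ev j) H.
have H3 := psd_qf (ev i) H.
have H4 := psd_qf (ev j) H.
move: H1 H2 H3 H4; rewrite !qf_comb !bf_e /qf_e.
rewrite /ev !qf_e.
move: (M i i) (M i j) (M j i) (M j j) => [a1 a2] [b1 b2] [c1 c2] [d1 d2].
rewrite !ge0_C /=.
move=> /andP [/eqP E1 G1] /andP [/eqP E2 G2] /andP [/eqP E3 G3] /andP [/eqP E4 G4].
split; lra.
Qed.

End Herm.
Section Series.
Variable R : realType.
Local Notation C := R[i].
Variable V : finType.
Local Notation Op := (Op R V).
Local Notation n := (dimV V).
Local Notation Re := (@complex.Re R).
Local Notation Im := (@complex.Im R).
Local Notation ev := (@ev R V).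

Lemma qf_bound (M : Op) i j (w : C) : is_psd M -> (w^*)%C * w = 1 ->
  Re (qf (ev i + w *: ev j) M) <= 2 * (Re (M i i) + Re (M j j)).
Proof.
move=> H Hw.
have H2 := psd_qf (ev i + (- w) *: ev j) H.
have E : qf (ev i + w *: ev j) M + qf (ev i + (- w) *: ev j) M =
         M i i + M i i + (M j j + M j j).
  rewrite !qf_comb rmorphN.
  have -> : qf (ev i) M + w * bf (ev i) (ev j) M + (w^*)%C * bf (ev j) (ev i) M +
      (w^*)%C * w * qf (ev j) M + (qf (ev i) M + - w * bf (ev i) (ev j) M +
      - (w^*)%C * bf (ev j) (ev i) M + - (w^*)%C * - w * qf (ev j) M) =
      qf (ev i) M + qf (ev i) M + ((w^*)%C * w) * (qf (ev j) M + qf (ev j) M) by ring.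
  by rewrite Hw mul1r /ev !qf_e.
have := congr1 Re E; rewrite !ReD.
move: H2; rewrite ge0_C => /andP [_ G].
move=> E'; lra.
Qed.

Lemma diag_le_tr (M : Op) i : is_psd M -> Re (M i i) <= Re (\tr M).
Proof.
move=> H; rewrite /mxtrace Re_sum (bigD1 i) //= lerDl sumr_ge0 // => k _.
by have := psd_diag k H; rewrite ge0_C => /andP [].
Qed.

Lemma qf_expand (v : 'cV[C]_n) (M : Op) :
  qf v M = \sum_l \sum_k ((v k 0)^*)%C * v l 0 * M k l.
Proof.
rewrite /qf mxE; apply: eq_bigr => l _; rewrite mxE big_distrl /=.
apply: eq_bigr => k _; rewrite adjmxE; ring.
Qed.

Lemma Re_qf (v : 'cV[C]_n) (M : Op) :
  Re (qf v M) = \sum_l \sum_k (Re (((v k 0)^*)%C * v l 0) * Re (M k l)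
                               - Im (((v k 0)^*)%C * v l 0) * Im (M k l)).
Proof.
rewrite qf_expand Re_sum; apply: eq_bigr => l _; rewrite Re_sum.
by apply: eq_bigr => k _; rewrite ReM.
Qed.

Lemma Im_qf (v : 'cV[C]_n) (M : Op) :
  Im (qf v M) = \sum_l \sum_k (Re (((v k 0)^*)%C * v l 0) * Im (M k l)
                               + Im (((v k 0)^*)%C * v l 0) * Re (M k l)).
Proof.
rewrite qf_expand Im_sum; apply: eq_bigr => l _; rewrite Im_sum.
by apply: eq_bigr => k _; rewrite ImM.
Qed.

Lemma cvg_entries_lin (S : nat -> Op) (L : Op) (a b : 'I_n -> 'I_n -> R) :
  (forall i j, Re (S m i j) @[m --> \oo] --> Re (L i j)) ->
  (forall i j, Im (S m i j) @[m --> \oo] --> Im (L i j)) ->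
  (\sum_l \sum_k (a k l * Re (S m k l) + b k l * Im (S m k l))) @[m --> \oo] -->
  \sum_l \sum_k (a k l * Re (L k l) + b k l * Im (L k l)).
Proof.
move=> HR HI.
apply: (@cvg_sum_seq _ _ _ (fun l m => \sum_k (a k l * Re (S m k l) + b k l * Im (S m k l)))) => l.
apply: (@cvg_sum_seq _ _ _ (fun k m => a k l * Re (S m k l) + b k l * Im (S m k l))) => k.
exact: (cvgD (cvgMl_tmp (HR k l)) (cvgMl_tmp (HI k l))).
Qed.

Lemma cvg_Re_qf (S : nat -> Op) (L : Op) v :
  (forall i j, Re (S m i j) @[m --> \oo] --> Re (L i j)) ->
  (forall i j, Im (S m i j) @[m --> \oo] --> Im (L i j)) ->
  Re (qf v (S m)) @[m --> \oo] --> Re (qf v L).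
Proof.
move=> HR HI.
pose a k l := Re (((v k 0)^*)%C * v l 0).
pose b k l := - Im (((v k 0)^*)%C * v l 0).
have E (M : Op) : Re (qf v M) = \sum_l \sum_k (a k l * Re (M k l) + b k l * Im (M k l)).
  rewrite Re_qf; apply: eq_bigr => l _; apply: eq_bigr => k _.
  by rewrite /a /b mulNr.
have -> : (fun m => Re (qf v (S m))) = (fun m => \sum_l \sum_k (a k l * Re (S m k l) + b k l * Im (S m k l))).
  by apply: funext => m; rewrite E.
by rewrite E; apply: cvg_entries_lin.
Qed.

Lemma cvg_Im_qf (S : nat -> Op) (L : Op) v :
  (forall i j, Re (S m i j) @[m --> \oo] --> Re (L i j)) ->
  (forall i j, Im (S m i j) @[m --> \oo] --> Im (L i j)) ->
  Im (qf v (S m)) @[m --> \oo] --> Im (qf v L).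
Proof.
move=> HR HI.
pose a k l := Im (((v k 0)^*)%C * v l 0).
pose b k l := Re (((v k 0)^*)%C * v l 0).
have E (M : Op) : Im (qf v M) = \sum_l \sum_k (a k l * Re (M k l) + b k l * Im (M k l)).
  rewrite Im_qf; apply: eq_bigr => l _; apply: eq_bigr => k _.
  by rewrite /a /b addrC.
have -> : (fun m => Im (qf v (S m))) = (fun m => \sum_l \sum_k (a k l * Re (S m k l) + b k l * Im (S m k l))).
  by apply: funext => m; rewrite E.
by rewrite E; apply: cvg_entries_lin.
Qed.

Lemma series_conv (f : nat -> Op) (c : C) :
  (forall k, is_psd (f k)) -> (forall m, \tr (partial_sum f m) <= c) ->
  [/\ op_hassum f (op_series f), is_psd (op_series f) & \tr (op_series f) <= c].
Proof.
move=> Hf Hc.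
pose S := partial_sum f.
have SS m : S m.+1 = S m + f m by rewrite /S /partial_sum big_ord_recr.
have Spsd m : is_psd (S m).
  elim: m => [|m IH]; first by rewrite /S /partial_sum big_ord0; apply: psd0.
  by rewrite SS; apply: psdD.
have mono v : {homo (fun m => Re (qf v (S m))) : p q / (p <= q)%N >-> p <= q}.
  apply/nondecreasing_seqP => m; rewrite SS qfD ReD lerDl.
  by have := psd_qf v (Hf m); rewrite ge0_C => /andP [].
have Rec m : Re (\tr (S m)) <= Re c by have := Hc m; rewrite le_C => /andP [].
have ubd i m : Re (S m i i) <= Re c.
  by apply: le_trans (Rec m); apply: diag_le_tr.
have cvg_diag i : cvgn (fun m => Re (S m i i)).
  have E : (fun m => Re (S m i i)) = (fun m => Re (qf (ev i) (S m))).
    by apply: funext => m; rewrite /ev qf_e.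
  rewrite E; apply: nondecreasing_is_cvgn; first exact: mono.
  by exists (Re c) => _ [m _ <-]; rewrite /ev qf_e.
have cvg_Q (w : C) i j : (w^*)%C * w = 1 -> cvgn (fun m => Re (qf (ev i + w *: ev j) (S m))).
  move=> Hw; apply: nondecreasing_is_cvgn; first exact: mono.
  exists (2 * (Re c + Re c)) => _ [m _ <-].
  apply: le_trans (qf_bound i j (Spsd m) Hw) _.
  by rewrite ler_pM2l // lerD.
have w1 : ((1 : C)^*)%C * 1 = 1 by rewrite conjc1 mulr1.
have wi : (('i%C : C)^*)%C * 'i%C = 1 by apply/eqP; rewrite eq_complex /=; apply/andP; split; apply/eqP; ring.
have cvgRe i j : Re (S m i j) @[m --> \oo] -->
   (limn (fun m => Re (qf (ev i + 1 *: ev j) (S m))) - limn (fun m => Re (S m i i))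
     - limn (fun m => Re (S m j j))) / 2.
  have E : (fun m => Re (S m i j)) = (fun m => (Re (qf (ev i + 1 *: ev j) (S m)) - Re (S m i i) - Re (S m j j)) / 2).
    by apply: funext => m; rewrite (psd_entries i j (Spsd m)).1.
  rewrite E; apply: cvgMr_tmp; apply: cvgB; [apply: cvgB|]; [exact: cvg_Q| exact: cvg_diag| exact: cvg_diag].
have cvgIm i j : Im (S m i j) @[m --> \oo] -->
   (limn (fun m => Re (S m i i)) + limn (fun m => Re (S m j j))
     - limn (fun m => Re (qf (ev i + 'i%C *: ev j) (S m)))) / 2.
  have E : (fun m => Im (S m i j)) = (fun m => (Re (S m i i) + Re (S m j j) - Re (qf (ev i + 'i%C *: ev j) (S m))) / 2).
    by apply: funext => m; rewrite (psd_entries i j (Spsd m)).2.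
  rewrite E; apply: cvgMr_tmp; apply: cvgB; [apply: cvgD|]; [exact: cvg_diag| exact: cvg_diag| exact: cvg_Q].
have HRe i j : Re (S m i j) @[m --> \oo] --> Re (op_series f i j).
  by rewrite /op_series mxE /=; apply: cvgP (cvgRe i j).
have HIm i j : Im (S m i j) @[m --> \oo] --> Im (op_series f i j).
  by rewrite /op_series mxE /=; apply: cvgP (cvgIm i j).
split.
- by move=> i j; split; [exact: HRe | exact: HIm].
- move=> v; rewrite -[X in 0 <= X]/(qf v _) ge0_C; apply/andP; split.
    apply/eqP; apply: (@cvg_eq0 _ (fun m => Im (qf v (S m)))).
      exact: cvg_Im_qf.
    by move=> m; have := psd_qf v (Spsd m); rewrite ge0_C => /andP [/eqP].
  apply: (cvgr_to_ge (cvg_Re_qf (v:=v) HRe HIm)).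
  by apply: nearW => m; have := psd_qf v (Spsd m); rewrite ge0_C => /andP [].
- have ImS m : Im (\tr (S m)) = 0.
    by have := tr_ge0 (Spsd m); rewrite ge0_C => /andP [/eqP].
  rewrite le_C; apply/andP; split.
    have := Hc 0%N; rewrite le_C => /andP [/eqP -> _].
    rewrite ImS /mxtrace Im_sum big1 // => k _.
    apply: (@cvg_eq0 _ (fun m => Im (S m k k))); first exact: HIm.
    by move=> m; have := psd_diag k (Spsd m); rewrite ge0_C => /andP [/eqP].
  have Ht : Re (\tr (S m)) @[m --> \oo] --> Re (\tr (op_series f)).
    have -> : (fun m => Re (\tr (S m))) = (fun m => \sum_k Re (S m k k)).
      by apply: funext => m; rewrite /mxtrace Re_sum.
    rewrite /mxtrace Re_sum.
    by apply: (@cvg_sum_seq _ _ _ (fun k m => Re (S m k k))) => k; apply: HRe.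
  apply: (cvgr_to_le Ht).
  by apply: nearW => m; apply: Rec.
Qed.

End Series.
Section SemPres.
Variable R : realType.
Local Notation C := R[i].
Variable V : finType.
Local Notation Op := (Op R V).

Definition pres (S : prog R V) :=
  forall rho : Op, is_psd rho -> is_psd (sem S rho) /\ \tr (sem S rho) <= \tr rho.

Definition witer (qs : seq V) (P : LOp R qs) (Sb : prog R V) (rho : Op) k :=
  iter k (fun r => sem Sb (assert_sem P r)) rho.

Lemma while_facts (qs : seq V) (P : LOp R qs) (Sb : prog R V) (rho : Op) :
  uniq qs -> is_projector P -> pres Sb -> is_psd rho ->
  let f := fun k => assert_sem (perp P) (witer P Sb rho k) in
  [/\ op_hassum f (sem (PWhile P Sb) rho), is_psd (sem (PWhile P Sb) rho),
      \tr (sem (PWhile P Sb) rho) <= \tr rho &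
      forall k, is_psd (witer P Sb rho k)].
Proof.
move=> Uq HP HS Hr f.
have HX k : is_psd (witer P Sb rho k).
  elim: k => [|k IH] //; by have [] := HS _ (assert_psd Uq HP IH).
have Hf k : is_psd (f k) by apply: assert_psd => //; apply: perp_projector.
have Hb m : \tr (partial_sum f m) + \tr (witer P Sb rho m) <= \tr rho.
  elim: m => [|m IH].
    by rewrite /partial_sum big_ord0 mxtrace0 add0r.
  apply: le_trans IH.
  rewrite /partial_sum big_ord_recr /= trD -addrA lerD2l.
  have E := tr_split Uq (witer P Sb rho m) HP.
  rewrite -[X in _ <= X]E addrC lerD2r.
  by have [] := HS _ (assert_psd Uq HP (HX m)).
have Hc m : \tr (partial_sum f m) <= \tr rho.
  apply: le_trans (Hb m); rewrite lerDl; exact: tr_ge0.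
have [H1 H2 H3] := series_conv Hf Hc.
by split.
Qed.

Lemma sem_pres (S : prog R V) : wf_prog S -> pres S.
Proof.
elim: S => [e|S0 IH0 S1 IH1|qs P S1 IH1 S0 IH0|qs P Sb IH] /=.
- case: e => [|qs|qs U|qs P] /=.
  + by move=> _ rho Hr; split.
  + move=> [Uq _] rho Hr; split; first exact: init_psd.
    by rewrite init_tr.
  + move=> [[Uq _] HU] rho Hr; split; first exact: unit_psd.
    by rewrite unit_tr.
  + move=> [[Uq _] HP] rho Hr; split; first exact: assert_psd.
    exact: assert_tr_le.
- move=> [W0 W1] rho Hr.
  have [Ha Hb] := IH0 W0 rho Hr.
  have [Hc Hd] := IH1 W1 _ Ha.
  by split=> //; apply: le_trans Hb.
- move=> [[[Uq _] HP] [W1 W0]] rho Hr.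
  have HA := assert_psd Uq HP Hr.
  have HB := assert_psd Uq (perp_projector HP) Hr.
  have [Ha Hb] := IH1 W1 _ HA.
  have [Hc Hd] := IH0 W0 _ HB.
  split; first exact: psdD.
  rewrite trD -(tr_split Uq rho HP).
  exact: lerD.
- move=> [[[Uq _] HP] W] rho Hr.
  have [_ H2 H3 _] := while_facts Uq HP (IH W) Hr.
  by split.
Qed.

Lemma dens_pres (S : prog R V) (rho : Op) : wf_prog S -> is_dens rho -> is_dens (sem S rho).
Proof.
move=> W [Hr Ht]; have [H1 H2] := sem_pres W Hr.
by split=> //; apply: le_trans Ht.
Qed.

End SemPres.
Section Abs.
Variable R : realType.
Variable V : finType.
Local Notation Op := (Op R V).
Variable A : Type.
Variables (le : A -> A -> Prop) (sup : set A -> A).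
Variables (alpha : set Op -> A) (gamma : A -> set Op).
Variable fsharp : bcmd R V -> A -> A.
Hypothesis WS : well_structured le sup alpha gamma.
Hypothesis Hca : forall e : bcmd R V, wf_bcmd e ->
     complete_abstraction alpha (sem_set (Basic e)) (fsharp e).

Local Notation best := (best_abs alpha gamma).

Lemma lrefl a : le a a. Proof. by case: WS => [[]]. Qed.
Lemma ltrans a b c : le a b -> le b c -> le a c.
Proof. by case: WS => [[_ H _ _ _] _ _]; apply: H. Qed.
Lemma sup_ub (X : set A) a : X a -> le a (sup X).
Proof. by case: WS => [[_ _ _ H _] _ _]; apply: H. Qed.
Lemma sup_least (X : set A) b : (forall a, X a -> le a b) -> le (sup X) b.
Proof. by case: WS => [[_ _ _ _ H] _ _]; apply: H. Qed.
Lemma amono (X Y : set Op) : in_Q X -> in_Q Y -> X `<=` Y -> le (alpha X) (alpha Y).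
Proof. by case: WS => [_ [H _ _ _ _] _]; apply: H. Qed.
Lemma gmono a b : le a b -> gamma a `<=` gamma b.
Proof. by case: WS => [_ [_ H _ _ _] _]; apply: H. Qed.
Lemma gQ a : in_Q (gamma a).
Proof. by case: WS => [_ [_ _ H _ _] _]; apply: H. Qed.
Lemma gal (X : set Op) a : in_Q X -> (X `<=` gamma a <-> le (alpha X) a).
Proof. by case: WS => [_ [_ _ _ H _] _]; apply: H. Qed.
Lemma agK a : alpha (gamma a) = a.
Proof. by case: WS => [_ [_ _ _ _ H] _]; apply: H. Qed.
Lemma addA : alpha_additive sup alpha.
Proof. by case: WS. Qed.

Lemma Q1 (x : Op) : is_dens x -> in_Q [set x].
Proof. by move=> Hx y ->. Qed.

Lemma G2 (X : set Op) x : in_Q X -> X x -> le (alpha [set x]) (alpha X).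
Proof. by move=> HX Hx; apply: amono => //; [apply: Q1; apply: HX | move=> y ->]. Qed.

Lemma G3 (X : set Op) b : in_Q X -> (forall x, X x -> le (alpha [set x]) b) -> le (alpha X) b.
Proof.
move=> HX H; apply/gal => // x Hx.
have := H x Hx; move/(gal _ (Q1 (HX x Hx))); apply; by [].
Qed.

Lemma G4 (X : set Op) : in_Q X -> X `<=` gamma (alpha X).
Proof. by move=> HX; apply/gal => //; apply: lrefl. Qed.

Lemma G5 a x : gamma a x -> le (alpha [set x]) a.
Proof. by move=> Hx; apply/gal; [apply: Q1; apply: gQ Hx | move=> y ->]. Qed.

Lemma G6 a x : is_dens x -> le (alpha [set x]) a -> gamma a x.
Proof. by move=> Hx /(gal _ (Q1 Hx)); apply. Qed.

Lemma setQ (S : prog R V) X : wf_prog S -> in_Q X -> in_Q (sem_set S X).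
Proof. by move=> W HX _ [x Hx <-]; apply: dens_pres => //; apply: HX. Qed.

Lemma best_mono (S : prog R V) a a' : wf_prog S -> le a a' -> le (best S a) (best S a').
Proof.
move=> W H; apply: amono; try apply: setQ; try apply: gQ; try done.
by move=> _ [x Hx <-]; exists x => //; apply: gmono H _ Hx.
Qed.

Lemma best_basic (e : bcmd R V) a : wf_bcmd e -> best (Basic e) a = fsharp e a.
Proof. by move=> W; rewrite /best_abs Hca ?agK //; apply: gQ. Qed.

Lemma img_le (S S' : prog R V) X : wf_prog S -> wf_prog S' -> in_Q X ->
  (forall x, X x -> le (alpha [set sem S x]) (alpha [set sem S' x])) ->
  le (alpha (sem_set S X)) (alpha (sem_set S' X)).
Proof.
move=> W W' HX H; apply: G3; first exact: setQ.
move=> _ [x Hx <-]; apply: ltrans (H x Hx) _.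
by apply: G2; [exact: setQ | exists x].
Qed.

Lemma seq_img (S0 S1 : prog R V) X : wf_prog S0 -> wf_prog S1 -> in_Q X ->
  le (alpha (sem_set S1 (sem_set S0 X))) (alpha (sem_set (PSeq S0 S1) X)) /\
  le (alpha (sem_set (PSeq S0 S1) X)) (alpha (sem_set S1 (sem_set S0 X))).
Proof.
move=> W0 W1 HX; have W : wf_prog (PSeq S0 S1) by [].
have HY := setQ W0 HX.
split; apply: G3; try apply: setQ => //.
  move=> _ [_ [x Hx <-] <-]; apply: G2; first exact: setQ.
  by exists x.
move=> _ [x Hx <-]; apply: G2; first by apply: setQ.
by exists (sem S0 x) => //; exists x.
Qed.

Lemma add_opt (g : nat -> option Op) (s : Op) :
  (forall n r, g n = Some r -> is_dens r) ->
  op_hassum (fun n => odflt 0 (g n)) s -> is_dens s ->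
  alpha [set s] = sup [set alpha [set r] | r in [set r | exists n, g n = Some r]].
Proof.
move=> Hg Hs Hd.
have := @addA (fun n => omap (fun r => ((1 : R), r)) (g n)) s.
have E1 : fam_term (fun n => omap (fun r => ((1 : R), r)) (g n)) = (fun n => odflt 0 (g n)).
  apply: funext => n; rewrite /fam_term; case: (g n) => //= r.
  by rewrite -[(1%:C)%C]/(1 : R[i]) scale1r.
have E2 : [set rho | exists n x, omap (fun r => ((1 : R), r)) (g n) = Some (x, rho)] =
          [set r | exists n, g n = Some r].
  apply/seteqP; split => r /= [n].
    by move=> [x]; case E: (g n) => [r'|] //= [_ <-]; exists n.
  by move=> E; exists n, 1; rewrite E.
rewrite E1 E2; apply => //.
move=> n x rho; case E: (g n) => [r|] //= [<- <-]; split => //.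
exact: Hg E.
Qed.

Section IfSplit.
Variables (qs : seq V) (P : LOp R qs) (S1 S0 : prog R V).
Hypothesis W : wf_prog (PIf P S1 S0).
Local Notation T1 := (PSeq (Basic (BAssert P)) S1).
Local Notation T0 := (PSeq (Basic (BAssert (perp P))) S0).

Lemma W1 : wf_prog T1.
Proof. by case: W => [[Hq HP] [H1 H0]]. Qed.
Lemma W0 : wf_prog T0.
Proof. by case: W => [[Hq HP] [H1 H0]]; split=> //; split=> //; apply: perp_projector. Qed.

Definition gif (x : Op) (n : nat) : option Op :=
  match n with 0 => Some (sem T1 x) | 1 => Some (sem T0 x) | _ => None end.

Lemma if_alpha (x : Op) : is_dens x ->
  alpha [set sem (PIf P S1 S0) x] = sup [set alpha [set r] | r in [set r | exists n, gif x n = Some r]].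
Proof.
move=> Hx; apply: add_opt; last exact: (dens_pres W Hx).
- move=> [|[|n]] r //= [<-]; [exact: (dens_pres W1 Hx) | exact: (dens_pres W0 Hx)].
- move=> i j.
  have E : \forall m \near \oo, partial_sum (fun n => odflt 0 (gif x n)) m = sem (PIf P S1 S0) x.
    exists 2%N => // m /= Hm.
    case: m Hm => [|[|m]] // _.
    rewrite /partial_sum !big_ord_recl big1 ?addr0 //.
  split; apply: cvg_near_cst; apply: filterS E => m ->; by [].
Qed.

Lemma if_i1 x : is_dens x -> le (alpha [set sem T1 x]) (alpha [set sem (PIf P S1 S0) x]).
Proof. by move=> Hx; rewrite (if_alpha Hx); apply: sup_ub; exists (sem T1 x) => //; exists 0%N. Qed.
Lemma if_i0 x : is_dens x -> le (alpha [set sem T0 x]) (alpha [set sem (PIf P S1 S0) x]).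
Proof. by move=> Hx; rewrite (if_alpha Hx); apply: sup_ub; exists (sem T0 x) => //; exists 1%N. Qed.
Lemma if_ii x c : is_dens x -> le (alpha [set sem T1 x]) c -> le (alpha [set sem T0 x]) c ->
  le (alpha [set sem (PIf P S1 S0) x]) c.
Proof.
move=> Hx H1 H0; rewrite (if_alpha Hx); apply: sup_least => _ [r [[|[|n]]]] //= [<-] <- //.
Qed.
End IfSplit.

Fixpoint iterp (qs : seq V) (P : LOp R qs) (Sb : prog R V) (k : nat) : prog R V :=
  match k with
  | 0 => Basic (BSkip R V)
  | k'.+1 => PSeq (iterp P Sb k') (PSeq (Basic (BAssert P)) Sb)
  end.

Section WhileSplit.
Variables (qs : seq V) (P : LOp R qs) (Sb : prog R V).
Hypothesis W : wf_prog (PWhile P Sb).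
Local Notation T := (PSeq (Basic (BAssert P)) Sb).
Local Notation Fk k := (PSeq (iterp P Sb k) (Basic (BAssert (perp P)))).

Lemma WT : wf_prog T.
Proof. by case: W. Qed.
Lemma Witer k : wf_prog (iterp P Sb k).
Proof. by elim: k => //= k IH; split=> //; apply: WT. Qed.
Lemma WF k : wf_prog (Fk k).
Proof.
split; first exact: Witer.
by case: W => [[Hq HP] _]; split=> //; apply: perp_projector.
Qed.

Lemma sem_iterp k x : sem (iterp P Sb k) x = witer P Sb x k.
Proof. by elim: k => //= k ->. Qed.

Lemma while_alpha (x : Op) : is_dens x ->
  alpha [set sem (PWhile P Sb) x] = sup [set alpha [set r] | r in [set r | exists n, Some (sem (Fk n) x) = Some r]].
Proof.
move=> Hx; apply: add_opt; last exact: (dens_pres W Hx).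
- by move=> n r [<-]; exact: (dens_pres (WF n) Hx).
- case: W => [[[Uq _] HP] Wb].
  have [H _ _ _] := while_facts Uq HP (sem_pres Wb) (proj1 Hx).
  move: H; congr op_hassum; apply: funext => n /=.
  by rewrite sem_iterp.
Qed.

Lemma wh_i x k : is_dens x -> le (alpha [set sem (Fk k) x]) (alpha [set sem (PWhile P Sb) x]).
Proof. by move=> Hx; rewrite (while_alpha Hx); apply: sup_ub; exists (sem (Fk k) x) => //; exists k. Qed.
Lemma wh_ii x c : is_dens x -> (forall k, le (alpha [set sem (Fk k) x]) c) ->
  le (alpha [set sem (PWhile P Sb) x]) c.
Proof.
move=> Hx H; rewrite (while_alpha Hx); apply: sup_least => _ [r [n [<-]] <-]; exact: H.
Qed.
End WhileSplit.

Definition KL (S : prog R V) := forall X, in_Q X -> forall x, gamma (alpha X) x ->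
  le (alpha [set sem S x]) (alpha (sem_set S X)).

Lemma KL_basic e : wf_bcmd e -> KL (Basic e).
Proof.
move=> W X HX x Hx.
have HQ := gQ (a:=alpha X).
apply: ltrans (_ : le _ (alpha (sem_set (Basic e) (gamma (alpha X))))) _.
  by apply: G2; [exact: setQ | exists x].
rewrite Hca // agK -Hca //; exact: lrefl.
Qed.

Lemma KL_seq S0 S1 : wf_prog S0 -> wf_prog S1 -> KL S0 -> KL S1 -> KL (PSeq S0 S1).
Proof.
move=> W0 W1 K0 K1 X HX x Hx.
have HY := setQ W0 HX.
have Hd : is_dens x by apply: (gQ Hx).
have H0 := K0 X HX x Hx.
have H1 := K1 _ HY (sem S0 x) (G6 (dens_pres W0 Hd) H0).
apply: ltrans H1 _; exact: (seq_img W0 W1 HX).1.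
Qed.

Lemma KL_all (S : prog R V) : wf_prog S -> KL S.
Proof.
elim: S => [e|S0 IH0 S1 IH1|qs P S1 IH1 S0 IH0|qs P Sb IH] /=.
- exact: KL_basic.
- by move=> [W0 W1]; apply: KL_seq; [| | apply: IH0 | apply: IH1].
- move=> W X HX x Hx; have Hd : is_dens x by apply: (gQ Hx).
  have [[Hq HP] [Wa Wb]] := W.
  have W1' := W1 W; have W0' := W0 W.
  have K1 : KL (PSeq (Basic (BAssert P)) S1).
    by apply: KL_seq => //; [apply: KL_basic | apply: IH1].
  have K0 : KL (PSeq (Basic (BAssert (perp P))) S0).
    apply: KL_seq => //; [by case: W0' | apply: KL_basic | apply: IH0] => //.
    by case: W0'.
  apply: if_ii => //.
    apply: ltrans (K1 X HX x Hx) _; apply: img_le => // y Hy.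
    by apply: if_i1 => //; apply: HX.
  apply: ltrans (K0 X HX x Hx) _; apply: img_le => // y Hy.
  by apply: if_i0 => //; apply: HX.
- move=> W X HX x Hx; have Hd : is_dens x by apply: (gQ Hx).
  have [[Hq HP] Wb] := W.
  have KT : KL (PSeq (Basic (BAssert P)) Sb).
    by apply: KL_seq => //; [apply: KL_basic | apply: IH].
  have Ki k : KL (iterp P Sb k).
    elim: k => [|k IHk] /=; first exact: KL_basic.
    by apply: KL_seq => //; apply: Witer.
  apply: wh_ii => // k.
  have KF : KL (PSeq (iterp P Sb k) (Basic (BAssert (perp P)))).
    apply: KL_seq => //; first exact: Witer.
      by split=> //; apply: perp_projector.
    by apply: KL_basic; split=> //; apply: perp_projector.
  apply: ltrans (KF X HX x Hx) _; apply: img_le => //; first exact: WF.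
  by move=> y Hy; apply: wh_i => //; apply: HX.
Qed.

Lemma best_eq (S : prog R V) X : wf_prog S -> in_Q X ->
  le (best S (alpha X)) (alpha (sem_set S X)) /\ le (alpha (sem_set S X)) (best S (alpha X)).
Proof.
move=> W HX; split.
  apply: G3; first by apply: setQ => //; apply: gQ.
  by move=> _ [x Hx <-]; apply: KL_all.
apply: amono; try apply: setQ; try apply: gQ; try done.
by move=> _ [x Hx <-]; exists x => //; apply: G4.
Qed.

Lemma seq_best (S0 S1 : prog R V) a : wf_prog S0 -> wf_prog S1 ->
  le (best S1 (best S0 a)) (best (PSeq S0 S1) a) /\ le (best (PSeq S0 S1) a) (best S1 (best S0 a)).
Proof.
move=> W0 W1; have HY := setQ W0 (gQ (a:=a)).
have [E1 E2] := best_eq W1 HY.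
have [F1 F2] := seq_img W0 W1 (gQ (a:=a)).
split; [exact: ltrans E1 F1 | exact: ltrans F2 E2].
Qed.

Lemma soundness a (S : prog R V) b : derivable_in le sup fsharp a S b -> wf_prog S -> le b (best S a).
Proof.
elim=> {a S b}.
- by move=> e a W; rewrite best_basic //; apply: lrefl.
- move=> a a' b S0 S1 _ IH0 _ IH1 [W0 W1].
  apply: ltrans (IH1 W1) _; apply: ltrans (best_mono W1 (IH0 W0)) _.
  exact: (seq_best a W0 W1).1.
- move=> a a' b b' S Ha _ IH Hb W.
  by apply: ltrans Hb (ltrans (IH W) (best_mono W Ha)).
- move=> a b0 b1 qs P S1 S0 _ IH1 _ IH0 W.
  apply: sup_least => _ [->|->].
    apply: ltrans (IH0 (W0 W)) _; apply: img_le; [exact: W0 W | exact: W | exact: gQ |].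
    by move=> x Hx; apply: if_i0 => //; apply: gQ Hx.
  apply: ltrans (IH1 (W1 W)) _; apply: img_le; [exact: W1 W | exact: W | exact: gQ |].
  by move=> x Hx; apply: if_i1 => //; apply: gQ Hx.
- move=> as_ bs qs P Sb _ IHa _ IHb W.
  have [[Hq HP] Wb] := W.
  have WA : wf_prog (Basic (BAssert (perp P))) by split=> //; apply: perp_projector.
  have Ha i : le (as_ i) (best (iterp P Sb i) (as_ 0%N)).
    elim: i => [|i IH] /=.
      rewrite -[X in le X _]agK; apply: amono; try apply: setQ; try apply: gQ; try done.
      by move=> x Hx; exists x.
    apply: ltrans (IHa i (WT W)) _.
    apply: ltrans (best_mono (WT W) IH) _.
    exact: (seq_best _ (Witer W i) (WT W)).1.
  apply: sup_least => _ [i _ <-].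
  apply: ltrans (IHb i WA) _.
  apply: ltrans (best_mono WA (Ha i)) _.
  apply: ltrans (seq_best _ (Witer W i) WA).1 _.
  apply: img_le; [exact: WF W i | exact: W | exact: gQ |].
  by move=> x Hx; apply: wh_i => //; apply: gQ Hx.
Qed.

Lemma comp_seq (S0 S1 : prog R V) : wf_prog S0 -> wf_prog S1 ->
  (forall a, derivable_in le sup fsharp a S0 (best S0 a)) ->
  (forall a, derivable_in le sup fsharp a S1 (best S1 a)) ->
  forall a, derivable_in le sup fsharp a (PSeq S0 S1) (best (PSeq S0 S1) a).
Proof.
move=> W0 W1 D0 D1 a.
apply: (ImpIn (lrefl a) (SeqIn (D0 a) (D1 (best S0 a)))).
exact: (seq_best a W0 W1).2.
Qed.

Lemma comp_basic (e : bcmd R V) : wf_bcmd e ->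
  forall a, derivable_in le sup fsharp a (Basic e) (best (Basic e) a).
Proof. by move=> W a; rewrite best_basic //; apply: ExpIn. Qed.

Lemma completeness (S : prog R V) : wf_prog S ->
  forall a, derivable_in le sup fsharp a S (best S a).
Proof.
elim: S => [e|S0 IH0 S1 IH1|qs P S1 IH1 S0 IH0|qs P Sb IH] /=.
- exact: comp_basic.
- by move=> [W0 W1]; apply: comp_seq; [| | apply: IH0 | apply: IH1].
- move=> W a; have [[Hq HP] [Wa Wb]] := W.
  have WA : wf_prog (Basic (BAssert (perp P))) by split=> //; apply: perp_projector.
  have WP : wf_prog (Basic (BAssert P)) by split.
  apply: (ImpIn (lrefl a) (MeasIn (comp_seq WP Wa (comp_basic (e:=BAssert P) WP) (IH1 Wa) a)
                                 (comp_seq WA Wb (comp_basic (e:=BAssert (perp P)) WA) (IH0 Wb) a))).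
  apply: G3; first by apply: setQ => //; apply: gQ.
  move=> _ [x Hx <-]; have Hd : is_dens x by apply: (gQ Hx).
  apply: if_ii => //.
    apply: ltrans (sup_ub (or_intror erefl)).
    apply: G2; last by exists x.
    by apply: setQ; [exact: W1 W | exact: gQ].
  apply: ltrans (sup_ub (or_introl erefl)).
  apply: G2; last by exists x.
  by apply: setQ; [exact: W0 W | exact: gQ].
- move=> W a; have [[Hq HP] Wb] := W.
  have WA : wf_prog (Basic (BAssert (perp P))) by split=> //; apply: perp_projector.
  have WP : wf_prog (Basic (BAssert P)) by split.
  have DT := comp_seq WP Wb (comp_basic (e:=BAssert P) WP) (IH Wb).
  pose as_ i := iter i (best (PSeq (Basic (BAssert P)) Sb)) a.
  pose bs i := best (Basic (BAssert (perp P))) (as_ i).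
  have D := WhileIn (as_:=as_) (bs:=bs) (fun i => DT (as_ i)) (fun i => comp_basic (e:=BAssert (perp P)) WA (as_ i)).
  apply: (ImpIn (lrefl a) D).
  have Hi k : le (best (iterp P Sb k) a) (as_ k).
    elim: k => [|k IHk] /=.
      by apply: G3; [apply: setQ => //; apply: gQ | move=> _ [x Hx <-]; apply: G5].
    apply: ltrans (seq_best _ (Witer W k) (WT W)).2 _.
    exact: best_mono (WT W) IHk.
  apply: G3; first by apply: setQ => //; apply: gQ.
  move=> _ [x Hx <-]; have Hd : is_dens x by apply: (gQ Hx).
  apply: wh_ii => // k.
  have Hr : range bs (bs k) by exists k.
  apply: ltrans (sup_ub Hr).
  apply: (ltrans (b:=best (PSeq (iterp P Sb k) (Basic (BAssert (perp P)))) a)).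
    apply: G2; last by exists x.
    by apply: setQ; [exact: WF W k | exact: gQ].
  apply: ltrans (seq_best _ (Witer W k) WA).2 _.
  exact: best_mono WA (Hi k).
Qed.

End Abs.
Local Close Scope classical_set_scope.
Local Close Scope ring_scope.

Theorem mainTheorem10 (R : realType) (V : finType) (A : Type)
    (le : A -> A -> Prop) (sup : set A -> A)
    (alpha : set (Op R V) -> A) (gamma : A -> set (Op R V))
    (fsharp : bcmd R V -> A -> A) :
  well_structured le sup alpha gamma ->
  (forall e : bcmd R V, wf_bcmd e ->
     forall a a' : A, le a a' -> le (fsharp e a) (fsharp e a')) ->
  (forall e : bcmd R V, wf_bcmd e ->
     complete_abstraction alpha (sem_set (Basic e)) (fsharp e)) ->
  forall (a b : A) (S : prog R V), wf_prog S ->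
    (derivable_in le sup fsharp a S b <-> valid_in le alpha gamma a S b).
Proof.
move=> WS _ Hca a b S W; split.
- by move=> D; apply: (soundness WS Hca D W).
- move=> Hv; exact: (ImpIn (lrefl WS a) (completeness WS Hca W a) Hv).
Qed.
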